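(* For every finite set $J$, the signatures $\mathrm{Even}_J$, $\mathrm{Odd}_J$ and $\mathrm{NAE}_J$ are strictly terraced. Moreover $\mathrm{Prat}(\mathrm{Even}_J)=\mathrm{Prat}(\mathrm{Odd}_J)=0$ and $\mathrm{Prat}(\mathrm{NAE}_J)\le3$.
   Context: $\mathrm{Even}_J(x)=1$ iff $\sum_ix_i$ is even; $\mathrm{Odd}_J(x)=1$ iff $\sum_ix_i$ is odd; $\mathrm{NAE}_J(x)=1$ iff $1\le\sum_ix_i\le|J|-1$ (each $0$ otherwise). Parity relations are the signatures $\mathrm{Even}_K$, $\mathrm{Odd}_K$ (and their copies). $e_i$ is the characteristic vector of $\{i\}$ and $\oplus$ is coordinatewise addition mod 2. A signature $F:\{0,1\}^J\to\mathbb{Q}_{\ge0}$ is strictly terraced if for all $x$ and $i,j\in J$, $F(x)=0$ implies $F(x\oplus e_i)=F(x\oplus e_j)$. A circuit $\phi$: finite set $J$ of incidences, vertices $V$ with sets $J_v$ partitioning $J$, external edges $A\subseteq J$, a partition $E$ of $J\setminus A$ into pairs, constraints $F_v:\{0,1\}^{J_v}\to\mathbb{Q}_{\ge0}$; assignments are $x$ with $x_i=x_j$ for $\{i,j\}\in E$; $[\![\phi]\!](x)=\sum_{x'}\prod_vF_v(x'|_{J_v})$ over assignments $x'$ extending $x\in\{0,1\}^A$. A copy of $F:\{0,1\}^I\to\mathbb{Q}_{\ge0}$ is $x\mapsto F(x\circ\pi)$ for a bijection $\pi$. For $F$ not identically zero, a parity-signature of $F$ is a positive constant multiple of $[\![\phi]\!]$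 for a circuit $\phi$ with exactly one constraint a copy of $F$ and all other constraints copies of parity relations. $\mathrm{Prat}(F)=\max\{F'(0)/F'(1)\}$ over parity-signatures $F':\{0,1\}\to\mathbb{Q}_{\ge0}$ of $F$ (one external edge) with $F'(1)>0$; $\mathrm{Prat}(F)=0$ if $F$ is identically zero. *)

(* Defs.v *)
From HB Require Import structures.
From mathcomp Require Import all_boot all_order all_algebra.
Set Implicit Arguments. Unset Strict Implicit. Unset Printing Implicit Defensive.
Import Order.TTheory GRing.Theory Num.Theory.
Local Open Scope ring_scope.

(* A signature on the finite set J: a function {0,1}^J -> Q (values >= 0 for
   the signatures considered here). *)
Definition signature (J : finType) := {ffun J -> bool} -> rat.

Definition ones (J : finType) (x : {ffun J -> bool}) : nat := (\sum_(i : J) (x i : nat))%N.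

Definition Even (J : finType) : signature J :=
  fun x => if ~~ odd (ones x) then 1 else 0.
Definition Odd (J : finType) : signature J :=
  fun x => if odd (ones x) then 1 else 0.
Definition NAE (J : finType) : signature J :=
  fun x => if (1 <= ones x <= #|J|.-1)%N then 1 else 0.

Definition flip (J : finType) (x : {ffun J -> bool}) (i : J) : {ffun J -> bool} :=
  [ffun k => if k == i then ~~ x k else x k].

Definition strictly_terraced (J : finType) (F : signature J) : Prop :=
  forall (x : {ffun J -> bool}) (i j : J), F x = 0 -> F (flip x i) = F (flip x j).

Definition is_copy (I K : finType) (F : signature I) (G : signature K) : Prop :=
  exists pi : I -> K, bijective pi /\
    forall x : {ffun K -> bool}, G x = F [ffun i => x (pi i)].

Definition is_parity_copy (K : finType) (G : signature K) : Prop :=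
  exists I : finType, is_copy (@Even I) G \/ is_copy (@Odd I) G.

(* A circuit: incidences [inc], vertices [vtx], [vof i] = vertex of incidence i
   (so J_v = [block v] and the J_v partition the incidences), and an involution
   [mate] whose fixed points are the external edges A and whose 2-cycles are the
   pairs {i,j} of E. *)
Record circuit := Circuit {
  inc : finType;
  vtx : finType;
  vof : inc -> vtx;
  mate : inc -> inc;
  mate_inv : involutive mate;
  cons : forall v : vtx, signature {i : inc | vof i == v}
}.

Definition block (phi : circuit) (v : vtx phi) : finType := {i : inc phi | vof i == v}.

Definition is_external (phi : circuit) (i : inc phi) : bool := mate i == i.

Definition restr (phi : circuit) (v : vtx phi) (x : {ffun inc phi -> bool})
  : {ffun block v -> bool} := [ffun k => x (val k)].

(* [[phi]](y) where only the values of y on the external edges matter: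
   sum over assignments x' (x'_i = x'_j on pairs of E) extending y|_A. *)
Definition circuit_value (phi : circuit) (y : inc phi -> bool) : rat :=
  \sum_(x : {ffun inc phi -> bool} |
          [forall i, x (mate i) == x i] &&
          [forall i, is_external i ==> (x i == y i)])
     \prod_(v : vtx phi) cons (restr v x).

Definition parity_circuit_of (J : finType) (F : signature J) (phi : circuit) : Prop :=
  exists v0 : vtx phi,
    is_copy F (@cons phi v0) /\
    forall v : vtx phi, v <> v0 -> is_parity_copy (@cons phi v).

Definition Prat_ratio (J : finType) (F : signature J) (r : rat) : Prop :=
  exists (phi : circuit) (c : rat),
    parity_circuit_of F phi /\
    #|[pred i : inc phi | @is_external phi i]| = 1%N /\
    0 < c /\
    0 < c * @circuit_value phi (fun _ => true) /\
    r = (c * @circuit_value phi (fun _ => false)) / (c * @circuit_value phi (fun _ => true)).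

Definition identically_zero (J : finType) (F : signature J) : Prop :=
  forall x, F x = 0.

Definition is_Prat (J : finType) (F : signature J) (p : rat) : Prop :=
  (identically_zero F /\ p = 0) \/
  (~ identically_zero F /\ Prat_ratio F p /\ forall r, Prat_ratio F r -> r <= p).

(* Main.v *)
Require Import Defs.
From HB Require Import structures.
From mathcomp Require Import all_boot all_order all_algebra.
From mathcomp Require Import zify.
Import Order.TTheory GRing.Theory Num.Theory.
Local Open Scope ring_scope.
Set Implicit Arguments. Unset Strict Implicit. Unset Printing Implicit Defensive.

Lemma oddS (I : Type) (r : seq I) (P : pred I) (F : I -> nat) :
  odd (\sum_(i <- r | P i) F i)%N = \big[addb/false]_(i <- r | P i) odd (F i).
Proof. by apply: big_morph; [exact: oddD|]. Qed.

Lemma ones_copy (I K : finType) (pi : I -> K) (x : {ffun K -> bool}) :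
  bijective pi -> ones [ffun i => x (pi i)] = ones x.
Proof.
move=> bij; rewrite /ones [in RHS](reindex pi) /=; last exact: onW_bij.
by apply: eq_bigr => i _; rewrite ffunE.
Qed.

Lemma ones_card (T : finType) (w : {ffun T -> bool}) : ones w = #|[pred i | w i]|.
Proof.
rewrite /ones -sum1_card [RHS]big_mkcond /=; apply: eq_bigr => i _.
by rewrite inE; case: (w i).
Qed.

Lemma ones_restr (phi : circuit) (v : vtx phi) (x : {ffun inc phi -> bool}) :
  ones (restr v x) = (\sum_(i | vof i == v) (x i : nat))%N.
Proof.
rewrite /ones (big_sub [pred i | vof i == v]) /=.
by apply: eq_bigr => k _; rewrite /restr ffunE.
Qed.

Definition valid (phi : circuit) (y : bool) (x : {ffun inc phi -> bool}) : bool :=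
  [forall i, x (mate i) == x i] && [forall i, is_external i ==> (x i == y)].

Definition good (phi : circuit) (y : bool) (x : {ffun inc phi -> bool}) : bool :=
  valid y x && [forall v, cons (restr v x) != 0].

Definition b01 (K : finType) (G : signature K) := forall w, G w = 0 \/ G w = 1.

Lemma value_card (phi : circuit) (y : bool) :
  (forall v, b01 (@cons phi v)) ->
  @circuit_value phi (fun _ => y) = (#|[pred x | @good phi y x]|)%:R.
Proof.
move=> H01; rewrite /circuit_value -sum1_card natr_sum.
rewrite [RHS]big_mkcond [LHS]big_mkcond /=; apply: eq_bigr => x _.
rewrite inE /good /valid.
case: ([forall i, _] && _) => //=.
case: forallP => [Hall|Hn].
  by rewrite big1 // => v _; case: (H01 v (restr v x)) => // e; move: (Hall v); rewrite e eqxx.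
have [v Hv] : exists v, cons (restr v x) = 0.
  case: (boolP [exists v, cons (restr v x) == 0]) => [/existsP [v /eqP Hv]|Hne].
    by exists v.
  exfalso; apply: Hn => v; apply/negP => /eqP Hv; move/existsP: Hne; apply.
  by exists v; rewrite Hv.
by rewrite (bigD1 v) //= Hv mul0r.
Qed.

Lemma mate_even (phi : circuit) (x : {ffun inc phi -> bool}) :
  (forall i, x (mate i) = x i) ->
  ~~ odd (\sum_(i | ~~ is_external i) (x i : nat))%N.
Proof.
move=> Hm.
set r := fun i : inc phi => nat_of_ord (enum_rank i).
have mm : forall i : inc phi, mate (mate i) = i by exact: (@mate_inv phi).
rewrite (bigID (fun i => (r i < r (mate i))%N)) /=.
set S := (\sum_(i | _ && (r i < r (mate i))%N) _)%N.
have -> : (\sum_(i | ~~ is_external i && ~~ (r i < r (mate i))%N) (x i : nat))%N = S.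
  rewrite (reindex_inj (inv_inj mm)) /=; apply: eq_big => i.
    rewrite /is_external mm [mate i == i]eq_sym; case: eqP => //= Hne.
    have : r (mate i) != r i.
      apply/negP => /eqP /val_inj /enum_rank_inj Heq.
      by apply: Hne.
    by rewrite -leqNgt leq_eqVlt eq_sym => /negbTE ->.
  by move=> _; rewrite Hm.
by rewrite addnn odd_double.
Qed.

Lemma good_parity (phi : circuit) (y : bool) (x : {ffun inc phi -> bool}) :
  #|[pred i : inc phi | is_external i]| = 1%N ->
  good y x -> y = \big[addb/false]_v odd (ones (restr v x)).
Proof.
move=> H1 /andP [/andP [/forallP Hm /forallP He] _].
have Hm' : forall i, x (mate i) = x i by move=> i; apply/eqP.
have [i0 Hi0] : exists i0, [pred i : inc phi | is_external i] =i pred1 i0.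
  by apply/card1P; rewrite H1.
have: odd (\sum_i (x i : nat))%N = y.
  rewrite (bigID (@is_external phi)) /= oddD (negbTE (mate_even Hm')) addbF.
  rewrite (big_pred1 i0); last by move=> i; move: (Hi0 i); rewrite !inE.
  have := He i0; move: (Hi0 i0); rewrite !inE eqxx => -> /= /eqP ->.
  exact: oddb.
move=> <-.
rewrite (partition_big (@vof phi) xpredT) //= oddS.
by apply: eq_bigr => v _; rewrite ones_restr.
Qed.

Definition nonconst (T : finType) (w : {ffun T -> bool}) : bool :=
  [exists i, w i] && [exists i, ~~ w i].

Lemma copy_b01 (I K : finType) (F : signature I) (G : signature K) :
  b01 F -> is_copy F G -> b01 G.
Proof. by move=> HF [pi [_ HG]] w; rewrite HG. Qed.

Lemma par_copy (K : finType) (G : signature K) :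
  is_parity_copy G -> exists c, forall w, G w = if odd (ones w) == c then 1 else 0.
Proof.
move=> [I [[pi [bij HG]]|[pi [bij HG]]]].
  by exists false => w; rewrite HG /Even ones_copy //; case: (odd _).
by exists true => w; rewrite HG /Odd ones_copy //; case: (odd _).
Qed.

Lemma nae_copy (I K : finType) (G : signature K) :
  is_copy (@NAE I) G -> forall w, G w = if nonconst w then 1 else 0.
Proof.
move=> [pi [bij HG]] w; rewrite HG /NAE ones_copy // (bij_eq_card bij) ones_card.
have := cardC [pred i | w i].
have e1 : [exists i, w i] = (0 < #|[pred i | w i]|)%N.
  apply/existsP/card_gt0P => [[i Hi]|[i Hi]]; exists i; by rewrite ?inE in Hi *.
have e2 : [exists i, ~~ w i] = (0 < #|[predC [pred i | w i]]|)%N.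
  apply/existsP/card_gt0P => [[i Hi]|[i Hi]]; exists i; by rewrite ?inE in Hi *.
rewrite /nonconst e1 e2.
move: #|[pred i | w i]| #|[predC _]| => a b <-.
case: a => [|a]; case: b => [|b] //=; rewrite ?addn0 ?addnS //= ?leqnn.
  by rewrite ltnn.
by rewrite ltnS leq_addr.
Qed.

Definition x3 (T : finType) (a b c : {ffun T -> bool}) : {ffun T -> bool} :=
  [ffun i => a i (+) b i (+) c i].

Lemma x3_inj (T : finType) (b c : {ffun T -> bool}) : injective (fun a => x3 a b c).
Proof.
move=> a a' /ffunP H; apply/ffunP => i; move: (H i); rewrite !ffunE.
by case: (a i) (a' i) (b i) (c i) => [] [] [] [].
Qed.

Lemma restr3 (phi : circuit) (v : vtx phi) (a b c : {ffun inc phi -> bool}) :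
  restr v (x3 a b c) = x3 (restr v a) (restr v b) (restr v c).
Proof. by apply/ffunP => k; rewrite !ffunE. Qed.

Lemma ones3 (T : finType) (a b c : {ffun T -> bool}) :
  odd (ones (x3 a b c)) = odd (ones a) (+) odd (ones b) (+) odd (ones c).
Proof.
rewrite /ones !oddS -!big_split /=; apply: eq_bigr => i _.
by rewrite ffunE !oddb.
Qed.

Lemma valid3 (phi : circuit) ya yb yc (a b c : {ffun inc phi -> bool}) :
  valid ya a -> valid yb b -> valid yc c -> valid (ya (+) yb (+) yc) (x3 a b c).
Proof.
move=> /andP [/forallP Ma /forallP Ea] /andP [/forallP Mb /forallP Eb]
        /andP [/forallP Mc /forallP Ec].
apply/andP; split; apply/forallP => i; rewrite !ffunE.
  by move: (Ma i) (Mb i) (Mc i) => /eqP -> /eqP -> /eqP ->.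
apply/implyP => Hi; move: (Ea i) (Eb i) (Ec i); rewrite Hi /=.
by move=> /eqP -> /eqP -> /eqP ->.
Qed.

Lemma nonconst3 (T : finType) (a b c : {ffun T -> bool}) :
  ~~ nonconst a -> ~~ nonconst b -> nonconst c -> nonconst (x3 a b c).
Proof.
have cst : forall w : {ffun T -> bool}, ~~ nonconst w -> forall i j, w i = w j.
  move=> w; rewrite /nonconst negb_and !negb_exists => /orP [] /forallP H i j.
    by move: (H i) (H j) => /negbTE -> /negbTE ->.
  by move: (H i) (H j); rewrite !negbK => -> ->.
move=> /cst Ha /cst Hb /andP [/existsP [i1 H1] /existsP [i2 H2]].
rewrite /nonconst; apply/andP; split; apply/existsP.
  case E: (a i1 (+) b i1).
    by exists i2; rewrite ffunE (Ha i2 i1) (Hb i2 i1) E (negbTE H2).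
  by exists i1; rewrite ffunE E H1.
case E: (a i1 (+) b i1).
  by exists i1; rewrite ffunE E H1.
by exists i2; rewrite ffunE (Ha i2 i1) (Hb i2 i1) E (negbTE H2).
Qed.

Definition Tset (phi : circuit) (v0 : vtx phi) (y : bool) (x : {ffun inc phi -> bool}) : bool :=
  valid y x && [forall v, (v != v0) ==> (cons (restr v x) != 0)].

Lemma if10 (b : bool) : ((if b then (1:rat) else 0) != 0) = b.
Proof. by case: b; rewrite ?oner_eq0 ?eqxx. Qed.

Lemma nae_bound (phi : circuit) (v0 : vtx phi) :
  (forall v, v != v0 -> exists c, forall w, @cons phi v w = if odd (ones w) == c then 1 else 0) ->
  (forall w, @cons phi v0 w = if nonconst w then 1 else 0) ->
  (0 < #|[pred x | @good phi true x]|)%N ->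
  (#|[pred x | @good phi false x]| <= 2 * #|[pred x | @good phi true x]|)%N.
Proof.
move=> Hpar Hnae.
have Hgood : forall y x, good y x = Tset v0 y x && nonconst (restr v0 x).
  move=> y x; rewrite /good /Tset; case: (valid y x) => //=.
  apply/forallP/andP => [H|[/forallP H Hn] v].
    split; last by move: (H v0); rewrite Hnae; case: (nonconst _); rewrite ?eqxx.
    by apply/forallP => v; apply/implyP => _; exact: H.
  case: (eqVneq v v0) => [->|Hv]; first by rewrite Hnae Hn oner_eq0.
  by move: (H v); rewrite Hv.
have T3 : forall ya yb yc a b c, Tset v0 ya a -> Tset v0 yb b -> Tset v0 yc c ->
     Tset v0 (ya (+) yb (+) yc) (x3 a b c).
  move=> ya yb yc a b c /andP [Va /forallP Ca] /andP [Vb /forallP Cb] /andP [Vc /forallP Cc].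
  rewrite /Tset valid3 //=; apply/forallP => v; apply/implyP => Hv.
  have [cv Hcv] := Hpar v Hv.
  move: (Ca v) (Cb v) (Cc v); rewrite Hv /= !Hcv restr3 ones3 !if10.
  by move=> /eqP -> /eqP -> /eqP ->; rewrite addbb addFb.
move=> /card_gt0P [a]; rewrite inE Hgood => /andP [Ta Na].
have s1 : (#|[pred x | @good phi false x]| <= #|[pred x | Tset v0 false x]|)%N.
  by apply: subset_leq_card; apply/subsetP => x; rewrite !inE Hgood => /andP [].
have s2 : (#|[pred x | Tset v0 false x]| <= #|[pred x | Tset v0 true x]|)%N.
  case: (boolP (0 < #|[pred x | Tset v0 false x]|)%N); last by rewrite -eqn0Ngt => /eqP ->.
  move=> /card_gt0P [t0]; rewrite inE => Tt0.
  rewrite -(card_imset _ (@x3_inj _ t0 a)).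
  apply: subset_leq_card; apply/subsetP => z /imsetP [x]; rewrite !inE => Tx ->.
  exact: (T3 false false true).
have s3 : #|[pred x | Tset v0 true x]| =
     (#|[pred x | @good phi true x]| + #|[pred x | Tset v0 true x && ~~ nonconst (restr v0 x)]|)%N.
  rewrite -(cardID [pred x | nonconst (restr v0 x)] [pred x | Tset v0 true x]).
  congr (_ + _)%N; apply: eq_card => x; rewrite !inE ?Hgood // andbC //.
have s4 : (#|[pred x | Tset v0 true x && ~~ nonconst (restr v0 x)]| <=
           #|[pred x | @good phi true x]|)%N.
  case: (boolP (0 < #|[pred x | Tset v0 true x && ~~ nonconst (restr v0 x)]|)%N);
    last by rewrite -eqn0Ngt => /eqP ->.
  move=> /card_gt0P [b0]; rewrite inE => /andP [Tb0 Nb0].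
  rewrite -(card_imset _ (@x3_inj _ b0 a)).
  apply: subset_leq_card; apply/subsetP => z /imsetP [x0]; rewrite !inE => /andP [Tx Nx] ->.
  rewrite Hgood (T3 true true true) //= restr3.
  exact: nonconst3.
rewrite mul2n -addnn; apply: (leq_trans s1); apply: (leq_trans s2).
by rewrite s3 leq_add2l.
Qed.

Lemma b01_if (K : finType) (G : signature K) (P : pred {ffun K -> bool}) :
  (forall w, G w = if P w then 1 else 0) -> b01 G.
Proof. by move=> H w; rewrite H; case: (P w); [right|left]. Qed.

Lemma pos_card (n : nat) (c : rat) : 0 < c * n%:R -> (0 < n)%N.
Proof. by case: n => // ; rewrite mulr0 ltxx. Qed.

Lemma ratio_parity (J : finType) (F : signature J) (c0 : bool) :
  b01 F -> (forall w, F w != 0 -> odd (ones w) = c0) ->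
  forall r, Prat_ratio F r -> r = 0.
Proof.
move=> HF Hc r [phi [c [[v0 [Hcopy Hpar]] [H1 [Hc0 [Hpos ->]]]]]].
have H01 : forall v, b01 (@cons phi v).
  move=> v; case: (eqVneq v v0) => [->|Hv]; first exact: copy_b01 Hcopy.
  by have [cv Hcv] := par_copy (Hpar v (elimN eqP Hv)); apply: b01_if Hcv.
have Hodd : forall v, exists cv, forall w, @cons phi v w != 0 -> odd (ones w) = cv.
  move=> v; case: (eqVneq v v0) => [->|Hv].
    have [pi [bij HG]] := Hcopy.
    by exists c0 => w; rewrite HG => /Hc; rewrite ones_copy.
  have [cv Hcv] := par_copy (Hpar v (elimN eqP Hv)).
  by exists cv => w; rewrite Hcv if10 => /eqP.
rewrite !value_card // in Hpos *.
have /card_gt0P [x Hx] := pos_card Hpos.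
suff -> : #|[pred x | @good phi false x]| = 0%N by rewrite mulr0 mul0r.
apply/eqP; rewrite eqn0Ngt; apply/negP => /card_gt0P [x' Hx'].
rewrite inE in Hx Hx'.
have e1 := good_parity H1 Hx; have e2 := good_parity H1 Hx'.
have : true = false.
  rewrite [LHS]e1 [RHS]e2; apply: eq_bigr => v _.
  have [cv Hcv] := Hodd v.
  move: Hx Hx' => /andP [_ /forallP Ax] /andP [_ /forallP Ax'].
  by rewrite (Hcv _ (Ax v)) (Hcv _ (Ax' v)).
by [].
Qed.

Lemma ratio_nae (J : finType) r : Prat_ratio (@NAE J) r -> r <= 2.
Proof.
move=> [phi [c [[v0 [Hcopy Hpar]] [H1 [Hc0 [Hpos ->]]]]]].
have Hnae := nae_copy Hcopy.
have H01 : forall v, b01 (@cons phi v).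
  move=> v; case: (eqVneq v v0) => [->|Hv]; first exact: b01_if Hnae.
  by have [cv Hcv] := par_copy (Hpar v (elimN eqP Hv)); apply: b01_if Hcv.
have Hpar' : forall v, v != v0 -> exists c, forall w,
    @cons phi v w = if odd (ones w) == c then 1 else 0.
  by move=> v Hv; apply: par_copy; apply: Hpar; exact: (elimN eqP Hv).
rewrite !value_card // in Hpos *.
have Hn := pos_card Hpos.
have Hle := nae_bound Hpar' Hnae Hn.
rewrite ler_pdivrMr //.
rewrite mulrCA; apply: ler_wpM2l; first exact: ltW.
by rewrite -natrM ler_nat.
Qed.

Section Construction.
Variables (J : finType) (F : signature J) (g : J -> option J) (b : option J -> bool).

Definition Cinc : finType := (J + (J + unit))%type.
Definition Cvtx : finType := option (option J).
Definition Cvof (i : Cinc) : Cvtx :=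
  match i with inl _ => None | inr (inl j) => Some (g j) | inr (inr _) => Some None end.
Definition Cmate (i : Cinc) : Cinc :=
  match i with inl j => inr (inl j) | inr (inl j) => inl j | inr (inr u) => inr (inr u) end.
Lemma Cmate_inv : involutive Cmate.
Proof. by case=> [j|[j|u]]. Qed.
Definition Ccons (v : Cvtx) : signature {i : Cinc | Cvof i == v} :=
  match v as v' return signature {i : Cinc | Cvof i == v'} with
  | None => fun w => F [ffun j => w (exist _ (inl j) (eqxx (None : Cvtx)))]
  | Some k => fun w => if odd (ones w) == b k then 1 else 0
  end.
Definition Ccirc : circuit := @Circuit Cinc Cvtx Cvof Cmate Cmate_inv Ccons.

Lemma CvofN r : (Cvof (inr r) == None) = false.
Proof. by case: r. Qed.

Definition Cpi (j : J) : {i : Cinc | Cvof i == None} :=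
  exist _ (inl j) (eqxx (None : Cvtx)).

Definition Cpinv (k : {i : Cinc | Cvof i == None}) : J :=
  match k with exist i Hi =>
    (match i as i' return Cvof i' == None -> J with
     | inl j => fun _ => j
     | inr r => fun H => False_rect J (notF (etrans (esym (CvofN r)) H))
     end) Hi
  end.

Lemma Cpi_bij : bijective Cpi.
Proof.
exists Cpinv => // [[[j|r] Hi]]; first by apply: val_inj.
by exfalso; move: Hi; rewrite CvofN.
Qed.

Lemma Cparity : parity_circuit_of F Ccirc.
Proof.
exists (None : Cvtx); split.
  by exists Cpi; split; [exact: Cpi_bij|].
move=> [k|] // _; exists {i : Cinc | Cvof i == Some k}.
case E: (b k); [right|left]; exists id; (split; first by exists id);
  move=> x; rewrite /= E; have -> : [ffun i => x (id i)] = x by apply/ffunP => i; rewrite ffunE.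
  by rewrite /Odd; case: (odd _).
by rewrite /Even; case: (odd _).
Qed.

Lemma Cext : #|[pred i : inc Ccirc | @is_external Ccirc i]| = 1%N.
Proof.
apply/eqP/card1P; exists (inr (inr tt) : Cinc) => i; rewrite !inE /is_external /=.
by case: i => [j|[j|[]]] /=; rewrite ?eqxx.
Qed.

Definition Cx (u : {ffun J -> bool}) (y : bool) : {ffun Cinc -> bool} :=
  [ffun i => match i with inl j => u j | inr (inl j) => u j | inr (inr _) => y end].

Lemma Cvalid u y : @valid Ccirc y (Cx u y).
Proof.
apply/andP; split; apply/forallP; first by case=> [j|[j|[]]]; rewrite !ffunE.
by case=> [j|[j|[]]]; rewrite /is_external //= !ffunE ?eqxx //.
Qed.

Lemma Cvalid_eq x y : @valid Ccirc y x -> x = Cx [ffun j => x (inl j)] y.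
Proof.
move=> /andP [/forallP Hm /forallP He]; apply/ffunP => -[j|[j|[]]]; rewrite !ffunE //.
  by move: (Hm (inl j)) => /= /eqP.
by move: (He (inr (inr tt))); rewrite /is_external /=; case: eqP => // _ /eqP.
Qed.

Lemma Cblock (x : {ffun Cinc -> bool}) k :
  ones (@restr Ccirc (Some k) x) =
  (\sum_(j | g j == k) (x (inr (inl j)) : nat) + (if k == None then x (inr (inr tt)) : nat else 0))%N.
Proof.
rewrite ones_restr big_sumType /= big_pred0 // add0n big_sumType /=.
congr (_ + _)%N.
case: (eqVneq k None) => [->|Hk].
  by rewrite (big_pred1 tt) // => -[]; rewrite !eqxx.
rewrite big_pred0 // => -[] /=; apply/negbTE; apply/eqP => -[] E.
by rewrite E eqxx in Hk.
Qed.

Lemma Cgood u y :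
  @good Ccirc y (Cx u y) =
  (F u != 0) && [forall k, odd (\sum_(j | g j == k) (u j : nat) +
                                 (if k == None then y : nat else 0))%N == b k].
Proof.
rewrite /good Cvalid /=.
apply/forallP/andP => [H|[HF /forallP H] [k|]].
- split; first by move: (H None); rewrite /= /restr; congr (F _ != 0); apply/ffunP => j; rewrite !ffunE.
  apply/forallP => k; move: (H (Some k)); rewrite /= if10 Cblock ffunE.
  have -> : (\sum_(j | g j == k) (Cx u y (inr (inl j)) : nat))%N = (\sum_(j | g j == k) (u j : nat))%N.
    by apply: eq_bigr => j _; rewrite ffunE.
  by [].
- rewrite /= if10 Cblock ffunE.
  have -> : (\sum_(j | g j == k) (Cx u y (inr (inl j)) : nat))%N = (\sum_(j | g j == k) (u j : nat))%N.
    by apply: eq_bigr => j _; rewrite ffunE.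
  exact: H.
- by rewrite /= /restr; move: HF; congr (F _ != 0); apply/ffunP => j; rewrite !ffunE.
Qed.

End Construction.

Lemma eqSome (T : eqType) (a c : T) : (Some a == Some c) = (a == c).
Proof. by apply/eqP/eqP => [[]|->]. Qed.

Lemma circ_b01 (J : finType) (F : signature J) (phi : circuit) :
  b01 F -> parity_circuit_of F phi -> forall v, b01 (@cons phi v).
Proof.
move=> HF [v0 [Hcopy Hpar]] v; case: (eqVneq v v0) => [->|Hv]; first exact: copy_b01 Hcopy.
by have [cv Hcv] := par_copy (Hpar v (elimN eqP Hv)); apply: b01_if Hcv.
Qed.

Lemma C_ratio (J : finType) (F : signature J) g b :
  b01 F -> (0 < #|[pred x | @good (Ccirc F g b) true x]|)%N ->
  Prat_ratio F ((#|[pred x | @good (Ccirc F g b) false x]|)%:R /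
                (#|[pred x | @good (Ccirc F g b) true x]|)%:R).
Proof.
move=> HF Hpos.
have H01 := circ_b01 HF (Cparity F g b).
exists (Ccirc F g b), 1; split; first exact: Cparity.
split; first exact: Cext.
rewrite !value_card // !mul1r; split => //; split => //.
by rewrite ltr0n.
Qed.

Lemma ones_e1 (J : finType) (j0 : J) : ones [ffun j => j == j0] = 1%N.
Proof.
rewrite /ones (bigD1 j0) //= big1 => [|j /negbTE Hj]; rewrite ffunE ?eqxx ?Hj //.
Qed.

Lemma ones0 (J : finType) : ones [ffun _ : J => false] = 0%N.
Proof. by rewrite /ones big1 // => j _; rewrite ffunE. Qed.

Lemma b01_Even (J : finType) : b01 (@Even J).
Proof. by apply: b01_if => w; rewrite /Even. Qed.
Lemma b01_Odd (J : finType) : b01 (@Odd J).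
Proof. by apply: b01_if => w; rewrite /Odd. Qed.
Lemma b01_NAE (J : finType) : b01 (@NAE J).
Proof. by apply: b01_if => w; rewrite /NAE. Qed.

Lemma is_Prat_Even (J : finType) : is_Prat (@Even J) 0.
Proof.
have Hp : forall r, Prat_ratio (@Even J) r -> r = 0.
  apply: (@ratio_parity _ _ false (@b01_Even J)) => w.
  by rewrite /Even; case: (odd _); rewrite ?eqxx.
right; split.
  by move=> /(_ [ffun _ => false]) /eqP; rewrite /Even ones0 /= oner_eq0.
pose g := fun j : J => Some j.
pose b := fun k : option J => k == None.
have Hg : @good (Ccirc (@Even J) g b) true (Cx [ffun _ => false] true).
  rewrite Cgood /Even ones0 /=; apply/forallP => k.
  rewrite big1 => [|j _]; last by rewrite ffunE.
  by case: k.
have Hpos : (0 < #|[pred x | @good (Ccirc (@Even J) g b) true x]|)%N.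
  by apply/card_gt0P; exists (Cx [ffun _ => false] true).
have HR := C_ratio (@b01_Even J) Hpos.
split; first by rewrite -(Hp _ HR).
by move=> r /Hp ->.
Qed.

Lemma is_Prat_Odd (J : finType) : is_Prat (@Odd J) 0.
Proof.
case: (pickP (@predT J)) => [j0 _|H0]; last first.
  have Hz : forall w : {ffun J -> bool}, ones w = 0%N.
    by move=> w; rewrite /ones big_pred0.
  by left; split => // w; rewrite /Odd Hz.
have Hp : forall r, Prat_ratio (@Odd J) r -> r = 0.
  apply: (@ratio_parity _ _ true (@b01_Odd J)) => w.
  by rewrite /Odd; case: (odd _); rewrite ?eqxx.
right; split.
  by move=> /(_ [ffun j => j == j0]) /eqP; rewrite /Odd ones_e1 /= oner_eq0.
pose g := fun j : J => Some j.
pose b := fun k : option J => (k == None) || (k == Some j0).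
have Hg : @good (Ccirc (@Odd J) g b) true (Cx [ffun j => j == j0] true).
  rewrite Cgood /Odd ones_e1 /=; apply/forallP => -[j|].
    rewrite /g /b /= addn0 (big_pred1 j) => [|j']; last by rewrite /= eqSome.
    by rewrite ffunE oddb eqSome.
  by rewrite big_pred0.
have Hpos : (0 < #|[pred x | @good (Ccirc (@Odd J) g b) true x]|)%N.
  by apply/card_gt0P; exists (Cx [ffun j => j == j0] true).
have HR := C_ratio (@b01_Odd J) Hpos.
split; first by rewrite -(Hp _ HR).
by move=> r /Hp ->.
Qed.

Lemma sum_pair (J : finType) (j1 j2 : J) (f : J -> nat) : j1 != j2 ->
  (\sum_(j | (j == j1) || (j == j2)) f j = f j1 + f j2)%N.
Proof.
move=> Hne; rewrite (bigD1 j1) ?eqxx //= (bigD1 j2) /=; last by rewrite eqxx orbT eq_sym Hne.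
rewrite [X in (_ + (_ + X))%N]big_pred0 ?addn0 //; move=> j /=.
by case: (j == j1); case: (j == j2).
Qed.

Lemma is_Prat_NAE (J : finType) : exists p : rat, is_Prat (@NAE J) p /\ p <= 3.
Proof.
case: (leqP #|J| 1) => HJ.
  exists 0; split => //; left; split => // w; rewrite /NAE.
  have -> : (#|J|.-1 = 0)%N by case: #|J| HJ => [|[]].
  by case: (ones w) => [|n].
case: (eqVneq #|J| 2) => HJ2.
  (* NAE_2 = Odd_2 *)
  have [j0 _] : exists j0 : J, j0 \in J by apply/card_gt0P; rewrite HJ2.
  exists 0; split => //.
  have Hp : forall r, Prat_ratio (@NAE J) r -> r = 0.
    apply: (@ratio_parity _ _ true (@b01_NAE J)) => w.
    rewrite /NAE HJ2 /=; case: ifP; rewrite ?eqxx // => /andP [H1 H2] _.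
    by have -> : ones w = 1%N by apply/eqP; rewrite eqn_leq H1 H2.
  have Hu : @NAE J [ffun j => j == j0] = 1 by rewrite /NAE ones_e1 HJ2.
  right; split.
    by move=> /(_ [ffun j => j == j0]) /eqP; rewrite Hu oner_eq0.
  pose g := fun j : J => Some j.
  pose b := fun k : option J => (k == None) || (k == Some j0).
  have Hg : @good (Ccirc (@NAE J) g b) true (Cx [ffun j => j == j0] true).
    rewrite Cgood Hu oner_eq0 /=; apply/forallP => -[j|].
      rewrite /g /b /= addn0 (big_pred1 j) => [|j']; last by rewrite /= eqSome.
      by rewrite ffunE oddb eqSome.
    by rewrite big_pred0.
  have Hpos : (0 < #|[pred x | @good (Ccirc (@NAE J) g b) true x]|)%N.
    by apply/card_gt0P; exists (Cx [ffun j => j == j0] true).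
  have HR := C_ratio (@b01_NAE J) Hpos.
  split; first by rewrite -(Hp _ HR).
  by move=> r /Hp ->.
have HJ3 : (2 < #|J|)%N by rewrite ltn_neqAle eq_sym HJ2.
have [j1 [j2 [_ _ Hne]]] : exists j1 j2 : J, [/\ j1 \in J, j2 \in J & j1 != j2].
  by apply/card_gt1P; apply: ltnW.
exists 2; split; last by rewrite ler_nat.
pose u1 := [ffun j => (j == j1) || (j == j2)].
pose g := fun j : J => if (j == j1) || (j == j2) then None else Some j.
pose b := fun k : option J => k == None.
pose phi := Ccirc (@NAE J) g b.
have Hg1 : forall j, (g j == None) = (j == j1) || (j == j2).
  by move=> j; rewrite /g; case: ifP.
have Hg2 : forall j j', (g j' == Some j) -> j' = j /\ ~~ ((j' == j1) || (j' == j2)).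
  by move=> j j'; rewrite /g; case: ifP => // H; rewrite eqSome => /eqP E.
have Hu1 : ones u1 = 2%N.
  rewrite ones_card; have := card2 j1 j2; rewrite Hne => <-; apply: eq_card => j.
  by rewrite !inE /u1 ffunE.
have Hex : forall j0 : J, ones [ffun j => j == j0] = 1%N by move=> j0; exact: ones_e1.
have NAE1 : forall j0 : J, @NAE J [ffun j => j == j0] = 1.
  by move=> j0; rewrite /NAE ones_e1 /=; case: #|J| HJ3 => [|[|[|n]]].
right; split.
  by move=> /(_ [ffun j => j == j1]) /eqP; rewrite NAE1 oner_eq0.
have G1 : @good phi true (Cx u1 true).
  rewrite Cgood /NAE Hu1 /=.
  have -> : (1 < #|J|.-1)%N by case: #|J| HJ3 => [|[|[|n]]].
  rewrite oner_eq0 /=; apply/forallP => -[j|].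
    rewrite big1 /b //= => j' /Hg2 [_]; rewrite /u1 ffunE; case: (_ || _) => //.
  rewrite /=; under eq_bigl => j do rewrite Hg1.
  rewrite sum_pair // /u1 !ffunE !eqxx /= orbT.
  by rewrite eqxx.
have G0 : forall j0, (j0 == j1) || (j0 == j2) -> @good phi false (Cx [ffun j => j == j0] false).
  move=> j0 Hj0; rewrite Cgood NAE1 oner_eq0 /=; apply/forallP => -[j|].
    rewrite big1 /b //= => j' /Hg2 [_]; rewrite ffunE.
    by case/orP: Hj0 => /eqP ->; case: (j' == j1); case: (j' == j2).
  rewrite /=; under eq_bigl => j do rewrite Hg1.
  rewrite sum_pair // !ffunE addn0.
  have Hne' := Hne; rewrite eq_sym in Hne'.
  by case/orP: Hj0 => /eqP ->; rewrite /b ?(negbTE Hne) ?(negbTE Hne') eqxx.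
have U1 : [pred x | @good phi true x] =i pred1 (Cx u1 true).
  move=> x; rewrite !inE; apply/idP/eqP => [Hx|->//].
  have Hv : valid true x by case/andP: Hx.
  rewrite (Cvalid_eq Hv) in Hx *.
  set u := [ffun j => x (inl j)] in Hx *.
  move: Hx; rewrite Cgood => /andP [Hn /forallP Hk].
  suff -> : u = u1 by [].
  have Hout : forall j, ~~ ((j == j1) || (j == j2)) -> u j = false.
    move=> j Hj; move: (Hk (Some j)); rewrite /b /= addn0.
    rewrite (big_pred1 j) ?oddb //.
    - by case: (u j).
    move=> j'; rewrite /=; apply/idP/eqP => [/Hg2 [] //|->].
    by rewrite /g (negbTE Hj).
  have Heq : u j1 = u j2.
    move: (Hk None); rewrite /b /= eqxx.
    under eq_bigl => j do rewrite Hg1.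
    rewrite sum_pair //.
    by case: (u j1); case: (u j2).
  have [j Hj] : exists j, u j.
    move: Hn; rewrite /NAE; case: ifP => [/andP [H1 _] _|]; last by rewrite eqxx.
    by move: H1; rewrite ones_card => /card_gt0P [j]; rewrite inE; exists j.
  have Ht : u j1 /\ u j2.
    case: (boolP ((j == j1) || (j == j2))) => [/orP [] /eqP Ej|Hj']; last by rewrite Hout in Hj.
      by subst j; rewrite -Heq Hj.
    by subst j; rewrite Heq Hj.
  apply/ffunP => j'; rewrite /u1 ffunE.
  case: (boolP ((j' == j1) || (j' == j2))) => [/orP [] /eqP ->|Hj']; [by case: Ht|by case: Ht|].
  exact: Hout.
have Hc1 : #|[pred x | @good phi true x]| = 1%N by rewrite (eq_card U1) card1.
have Hc0 : (2 <= #|[pred x | @good phi false x]|)%N.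
  have Hd : Cx [ffun j => j == j1] false != Cx [ffun j => j == j2] false.
    apply/negP => /eqP /ffunP /(_ (inl j1)); rewrite !ffunE eqxx.
    by move=> H; rewrite -H in Hne.
  have := card2 (Cx [ffun j => j == j1] false) (Cx [ffun j => j == j2] false).
  rewrite Hd => <-; apply: subset_leq_card; apply/subsetP => x; rewrite !inE.
  by case/orP => /eqP ->; apply: G0; rewrite eqxx ?orbT.
have Hpos : (0 < #|[pred x | @good phi true x]|)%N by rewrite Hc1.
have HR := C_ratio (@b01_NAE J) Hpos.
have Hle := ratio_nae HR.
rewrite Hc1 divr1 in HR Hle.
have E2 : (#|[pred x | @good phi false x]|)%:R = 2 :> rat.
  apply/eqP; rewrite eq_le Hle /= -(ler_nat rat) in Hc0 *.
  exact: Hc0.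
rewrite E2 in HR; split => // r /ratio_nae //.
Qed.

Lemma ones_flip (J : finType) (x : {ffun J -> bool}) (i : J) :
  (ones (flip x i) + x i = ones x + ~~ x i)%N.
Proof.
rewrite /ones (bigD1 i) //= [in RHS](bigD1 i) //= /flip ffunE eqxx.
have -> : (\sum_(j | j != i) ([ffun k => if k == i then ~~ x k else x k] j : nat))%N =
          (\sum_(j | j != i) (x j : nat))%N.
  by apply: eq_bigr => j /negbTE Hj; rewrite ffunE Hj.
by case: (x i) => /=; rewrite ?addn0 ?add0n addnC.
Qed.

Lemma odd_flip (J : finType) (x : {ffun J -> bool}) (i : J) :
  odd (ones (flip x i)) = ~~ odd (ones x).
Proof.
have := congr1 odd (ones_flip x i); rewrite !oddD.
by case: (x i); case: (odd (ones (flip x i))); case: (odd (ones x)).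
Qed.

Lemma terraced_Even (J : finType) : strictly_terraced (@Even J).
Proof. by move=> x i j _; rewrite /Even !odd_flip. Qed.

Lemma terraced_Odd (J : finType) : strictly_terraced (@Odd J).
Proof. by move=> x i j _; rewrite /Odd !odd_flip. Qed.

Lemma terraced_NAE (J : finType) : strictly_terraced (@NAE J).
Proof.
move=> x i j Hx.
have Hle : (ones x <= #|J|)%N by rewrite ones_card max_card.
have HC := cardC [pred k | x k].
rewrite -ones_card in HC.
suff [c Hc] : exists c, forall k, x k = c.
  rewrite /NAE.
  have F1 := ones_flip x i; have F2 := ones_flip x j.
  rewrite !Hc in F1 F2.
  have -> : ones (flip x i) = ones (flip x j) by case: c {Hc} F1 F2 => /= F1 F2; lia.
  by [].
move: Hx; rewrite /NAE; case: ifP => [_ /eqP|H _]; first by rewrite oner_eq0.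
case: (posnP (ones x)) => H0.
  exists false => k; apply/negP => Hk.
  move: H0; rewrite ones_card => /eqP; rewrite -leqn0; apply/negP; rewrite -ltnNge.
  by apply/card_gt0P; exists k.
exists true => k; apply/negP => /negP Hk.
have H1 : (ones x = #|J|)%N.
  move: H; rewrite H0 /=; move/negbT; rewrite -ltnNge.
  by case: #|J| Hle => [|n] /=; lia.
move: HC; rewrite H1 -[X in _ = X]addn0 => /addnI /card0_eq /(_ k).
by rewrite !inE Hk.
Qed.

Unset Implicit Arguments.

Theorem lemma13 (J : finType) :
  [/\ strictly_terraced (@Even J), strictly_terraced (@Odd J) & strictly_terraced (@NAE J)] /\
  [/\ is_Prat (@Even J) 0, is_Prat (@Odd J) 0 &
      exists p : rat, is_Prat (@NAE J) p /\ p <= 3].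
Proof.
split; split.
- exact: terraced_Even.
- exact: terraced_Odd.
- exact: terraced_NAE.
- exact: is_Prat_Even.
- exact: is_Prat_Odd.
- exact: is_Prat_NAE.
Qed.
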